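(* Let $R$ be a commutative ring and $S$ a multiplicative subset of $R$ satisfying the maximal multiple condition. Then the following are equivalent: (1) $R$ is a uniformly $S$-Noetherian ring; (2) $R$ is an $S$-Noetherian ring; (3) the localization $R_S$ is a Noetherian ring.
   Context: Rings are commutative with identity. $S$ satisfies the maximal multiple condition if there is $s\in S$ such that every $t\in S$ divides $s$ in $R$. $R$ is $S$-Noetherian if for every ideal $I$ there are a finitely generated ideal $K\subseteq I$ and $s\in S$ (possibly depending on $I$) with $sI\subseteq K$. $R$ is uniformly $S$-Noetherian if there is a single $s\in S$ such that for every ideal $I$ there is a finitely generated ideal $K\subseteq I$ with $sI\subseteq K$. *)

(* Defs.v *)
From HB Require Import structures.
From mathcomp Require Import all_boot all_order all_algebra.
Set Implicit Arguments. Unset Strict Implicit. Unset Printing Implicit Defensive.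
Import GRing.Theory.
Local Open Scope ring_scope.

Definition is_ideal (R : comPzRingType) (I : R -> Prop) : Prop :=
  [/\ I 0, (forall x y, I x -> I y -> I (x + y)) & (forall r x, I x -> I (r * x))].

Definition ideal_span (R : comPzRingType) (l : seq R) : R -> Prop :=
  fun x => exists c : 'I_(size l) -> R, x = \sum_(i < size l) c i * l`_i.

Definition fg_ideal (R : comPzRingType) (K : R -> Prop) : Prop :=
  exists l : seq R, forall x, K x <-> ideal_span l x.

Definition mult_subset (R : comPzRingType) (S : R -> Prop) : Prop :=
  S 1 /\ (forall s t, S s -> S t -> S (s * t)).

Definition maximal_multiple_condition (R : comPzRingType) (S : R -> Prop) : Prop :=
  exists2 s, S s & forall t, S t -> exists r : R, s = r * t.

Definition noetherian (R : comPzRingType) : Prop :=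
  forall I : R -> Prop, is_ideal I -> fg_ideal I.

Definition S_noetherian (R : comPzRingType) (S : R -> Prop) : Prop :=
  forall I : R -> Prop, is_ideal I ->
    exists2 s, S s & exists K : R -> Prop,
      [/\ is_ideal K, fg_ideal K, (forall x, K x -> I x) & (forall x, I x -> K (s * x))].

Definition uniformly_S_noetherian (R : comPzRingType) (S : R -> Prop) : Prop :=
  exists2 s, S s & forall I : R -> Prop, is_ideal I ->
    exists K : R -> Prop,
      [/\ is_ideal K, fg_ideal K, (forall x, K x -> I x) & (forall x, I x -> K (s * x))].

Definition is_localization (R T : comPzRingType) (S : R -> Prop)
  (f : {rmorphism R -> T}) : Prop :=
  [/\ (forall s, S s -> exists u : T, f s * u = 1),
      (forall z : T, exists r s, S s /\ z * f s = f r) &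
      (forall x y, f x = f y -> exists2 c, S c & c * x = c * y)].

(* Main.v *)
Require Import Defs.
From HB Require Import structures.
From mathcomp Require Import all_boot all_order all_algebra.
From mathcomp Require Import ring.
From Stdlib Require Import ClassicalEpsilon.
Import GRing.Theory.
Local Open Scope ring_scope.

Section Helpers.
Variable R : comPzRingType.

Lemma span_nat (l : seq R) x : ideal_span l x <->
  exists c : nat -> R, x = \sum_(i < size l) c i * l`_i.
Proof.
split.
- move=> [c ->]; exists (fun k => odflt 0 (omap c (insub k))).
  by apply: eq_bigr => i _; rewrite valK.
- move=> [c ->]; by exists (fun i => c (val i)).
Qed.

Lemma ideal_sum (I : R -> Prop) n (F : 'I_n -> R) :
  is_ideal I -> (forall i, I (F i)) -> I (\sum_(i < n) F i).
Proof.
move=> [I0 ID IM] HF; apply: (big_ind I) => //.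
Qed.

Lemma span_ideal (l : seq R) : is_ideal (ideal_span l).
Proof.
split.
- exists (fun _ => 0); by rewrite big1 // => i _; rewrite mul0r.
- move=> x y [c ->] [d ->]; exists (fun i => c i + d i).
  by rewrite -big_split; apply: eq_bigr => i _; rewrite mulrDl.
- move=> r x [c ->]; exists (fun i => r * c i).
  by rewrite mulr_sumr; apply: eq_bigr => i _; rewrite mulrA.
Qed.

Lemma span_gen (l : seq R) i : (i < size l)%N -> ideal_span l l`_i.
Proof.
move=> Hi; apply/span_nat; exists (fun k => if k == i then 1 else 0).
rewrite (bigD1 (Ordinal Hi)) //= eqxx mul1r big1 ?addr0 // => j Hj.
case: eqP => [Ej|]; last by rewrite mul0r.
by move: Hj; rewrite -(inj_eq val_inj) /= Ej eqxx.
Qed.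

Lemma span_sub (I : R -> Prop) (l : seq R) : is_ideal I ->
  (forall i, (i < size l)%N -> I l`_i) -> forall x, ideal_span l x -> I x.
Proof.
move=> HI Hl x [c ->]; apply: ideal_sum => // i.
case: HI => _ _ IM; apply: IM; exact: Hl.
Qed.

End Helpers.

Theorem proposition2p5 (R : comPzRingType) (S : R -> Prop)
  (T : comPzRingType) (f : {rmorphism R -> T}) :
  mult_subset S -> maximal_multiple_condition S -> is_localization S f ->
  [/\ (uniformly_S_noetherian S <-> S_noetherian S),
      (S_noetherian S <-> noetherian T) &
      (uniformly_S_noetherian S <-> noetherian T)].
Proof.
move=> [S1 SM] [s0 Ss0 Hs0] [Hunit Hfrac Hker].
have A : uniformly_S_noetherian S -> S_noetherian S.
  move=> [s Ss H] I HI; exists s => //; exact: H.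
have B : S_noetherian S -> uniformly_S_noetherian S.
  move=> H; exists s0 => // I HI.
  have [s Ss [K [Kid Kfg KI IK]]] := H I HI.
  exists K; split => // x Ix.
  have [r ->] := Hs0 s Ss.
  rewrite -mulrA; case: Kid => _ _ KM; apply: KM; exact: IK.
have C : S_noetherian S -> noetherian T.
  move=> H J [J0 JD JM].
  pose I := fun x => J (f x).
  have HI : is_ideal I.
    split; rewrite /I.
    - by rewrite rmorph0.
    - by move=> x y Hx Hy; rewrite rmorphD; auto.
    - by move=> r x Hx; rewrite rmorphM; auto.
  have [s Ss [K [Kid [l Hl] KI IK]]] := H I HI.
  exists (map f l) => z; split.
  - move=> Jz; have [r [t [St Ezt]]] := Hfrac z.
    have Ir : I r by rewrite /I -Ezt mulrC; apply: JM.
    have /Hl /span_nat [c Ec] := IK r Ir.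
    have [u Hu] := Hunit _ (SM _ _ Ss St).
    apply/span_nat; exists (fun i => u * f (c i)); rewrite size_map.
    have -> : z = u * f (s * r).
      rewrite rmorphM in Hu; rewrite rmorphM -Ezt.
      rewrite -[LHS]mulr1 -Hu; ring.
    rewrite Ec rmorph_sum mulr_sumr; apply: eq_bigr => i _.
    by rewrite rmorphM (nth_map 0) // mulrA.
  - apply: span_sub; first by split.
    move=> i; rewrite size_map => Hi; rewrite (nth_map 0) //.
    by apply: KI; apply/Hl; apply: span_gen.
have LA : forall z, exists r, z * f s0 = f r.
  move=> z; have [r [t [St Ezt]]] := Hfrac z.
  have [a ->] := Hs0 t St; exists (a * r).
  by rewrite !rmorphM -Ezt mulrCA.
have D : noetherian T -> uniformly_S_noetherian S.
  move=> H; exists s0 => // I [I0 ID IM].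
  pose J := fun z => exists x t, [/\ I x, S t & z * f t = f x].
  have HJ : is_ideal J.
    split.
    - by exists 0, 1; rewrite rmorph0 rmorph1 mul0r.
    - move=> z1 z2 [x1 [t1 [I1 S1' E1]]] [x2 [t2 [I2 S2 E2]]].
      exists (t2 * x1 + t1 * x2), (t1 * t2); split; auto.
      rewrite rmorphD !rmorphM -E1 -E2; ring.
    - move=> r z [x [t [Ix St E]]].
      have [r' [t' [St' E']]] := Hfrac r.
      exists (r' * x), (t' * t); split; auto.
      by rewrite !rmorphM -E -E'; ring.
  have [l' Hl'] := H J HJ.
  have HX : forall j, exists x, (j < size l')%N -> I x /\ l'`_j * f s0 = f x.
    move=> j; case: (ltnP j (size l')) => Hj; last by exists 0.
    have [x [t [Ix St E]]] : J l'`_j by apply/Hl'; apply: span_gen.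
    have [a Ea] := Hs0 t St.
    exists (a * x) => _; split; first by apply: IM.
    by rewrite Ea !rmorphM -E; ring.
  pose X := fun j => proj1_sig (constructive_indefinite_description _ (HX j)).
  have PX : forall j, (j < size l')%N -> I (X j) /\ l'`_j * f s0 = f (X j).
    move=> j; exact: (proj2_sig (constructive_indefinite_description _ (HX j))).
  pose E := fun z => proj1_sig (constructive_indefinite_description _ (LA z)).
  have PE : forall z, z * f s0 = f (E z).
    move=> z; exact: (proj2_sig (constructive_indefinite_description _ (LA z))).
  exists (ideal_span (mkseq X (size l'))); split.
  - exact: span_ideal.
  - by exists (mkseq X (size l')).
  - apply: span_sub; first by split.
    move=> i; rewrite size_mkseq => Hi; rewrite nth_mkseq //; exact: (PX i Hi).1.
  - move=> x Ix.
    have Jx : J (f x) by exists x, 1; rewrite rmorph1 mulr1.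
    have /Hl' /span_nat [d Ed] := Jx.
    have Ef : f (x * (s0 * s0)) =
        f (\sum_(i < size l') E (d i) * X i).
      rewrite rmorph_sum rmorphM rmorphM Ed mulr_suml.
      apply: eq_bigr => i _.
      by rewrite rmorphM -PE -(PX i (ltn_ord i)).2 mulrACA.
    have [c Sc Ec] := Hker _ _ Ef.
    have [b Eb] := Hs0 _ (SM _ _ Sc (SM _ _ Ss0 Ss0)).
    apply/span_nat; exists (fun i => b * c * E (d i)); rewrite size_mkseq.
    have -> : s0 * x = b * (c * (x * (s0 * s0))).
      by rewrite [in LHS]Eb -!mulrA (mulrC x) ?mulrA.
    rewrite Ec mulr_sumr mulr_sumr; apply: eq_bigr => i _.
    by rewrite nth_mkseq // !mulrA.
split; split => [h|h].
- exact: A.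
- exact: B.
- exact: C.
- exact: A (D h).
- exact: C (A h).
- exact: D.
Qed.
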